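(* In the strategic parking problem on a weighted line graph, any (random) pricing function $P$ on the vacant slots that satisfies the Harmonic Payment Conditions ensures harmonic behaviour of an arriving car, regardless of its goal: if its goal is vacant it parks there; otherwise, letting $v_L,v_R$ be the nearest vacant slots to the left and right of its goal $v$, it parks at $v_L$ with probability $\frac{d(v,v_R)}{d(v,v_L)+d(v,v_R)}$ and at $v_R$ otherwise.
   Context: Parking slots are vertices on a line with path distances $d$; some are occupied and $V'$ is the set of vacant slots. An arriving car with goal vertex $g$ parks at a vacant slot $x$ minimizing $d(g,x)+P(x)$. A block is a maximal contiguous run of occupied slots; for a block $B_j$, $L(B_j)$ and $R(B_j)$ are the first vacant slots to its left and right, $d_j=d(L(B_j),R(B_j))$, and $D_j$ is the uniform distribution on $[-d_j,d_j]$. $P:V'\to\mathbb{R}_{\ge0}$ satisfies the Harmonic Payment Conditions if (1) for every block $B_j$, $P(L(B_j))-P(R(B_j))\sim D_j$; and (2) for any $u,v\in V'$ with no vacant slot between them, $-d(u,v)<P(u)-P(v)<d(u,v)$. *)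

(* Defs.v *)
From HB Require Import structures.
From mathcomp Require Import all_boot all_order all_algebra.
From mathcomp Require Import all_classical all_reals all_analysis.
Set Implicit Arguments. Unset Strict Implicit. Unset Printing Implicit Defensive.
Import Order.TTheory GRing.Theory Num.Theory.
Local Open Scope classical_set_scope.
Local Open Scope ring_scope.

(* The weighted line graph: slots 'I_n placed at strictly increasing
   positions pos; the path distance is d(u,v) = |pos u - pos v|. *)
Definition line_dist (R : realType) (n : nat) (pos : 'I_n -> R) (u v : 'I_n) : R :=
  `|pos u - pos v|.

Definition block_LR (n : nat) (occ : {set 'I_n}) (l r : 'I_n) : Prop :=
  [/\ l \notin occ, r \notin occ, (l.+1 < r)%N &
      forall k : 'I_n, (l < k < r)%N -> k \in occ].

Definition uniform_sym (R : realType) (d : measure_display) (Omega : measurableType d)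
  (Pr : probability Omega R) (f : Omega -> R) (c : R) : Prop :=
  measurable_fun setT f /\
  forall A : set R, measurable A ->
    Pr (f @^-1` A) = (lebesgue_measure (A `&` [set x : R | (- c <= x <= c)%R]) * ((2 * c)^-1)%:E)%E.

(* Harmonic Payment Conditions for a random price P : Omega -> 'I_n -> R
   (only values on vacant slots are relevant). *)
Definition harmonic_payment (R : realType) (d : measure_display) (Omega : measurableType d)
  (Pr : probability Omega R) (n : nat) (pos : 'I_n -> R) (occ : {set 'I_n})
  (P : Omega -> 'I_n -> R) : Prop :=
  (forall l r : 'I_n, block_LR occ l r ->
     uniform_sym Pr (fun w => P w l - P w r) (line_dist pos l r)) /\
  (forall w (u v : 'I_n), u \notin occ -> v \notin occ -> (u < v)%N ->
     (forall k : 'I_n, (u < k < v)%N -> k \in occ) ->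
     - line_dist pos u v < P w u - P w v < line_dist pos u v).

Definition parks_at (R : realType) (n : nat) (pos : 'I_n -> R) (occ : {set 'I_n})
  (p : 'I_n -> R) (g x : 'I_n) : Prop :=
  x \notin occ /\
  forall y : 'I_n, y \notin occ -> y != x ->
    line_dist pos g x + p x < line_dist pos g y + p y.

(* Main.v *)
Require Import Defs.
From HB Require Import structures.
From mathcomp Require Import all_boot all_order all_algebra.
From mathcomp Require Import all_classical all_reals all_analysis.
From mathcomp Require Import lra zify ring.
Import Order.TTheory GRing.Theory Num.Theory.
Local Open Scope classical_set_scope.
Local Open Scope ring_scope.

Lemma dist_lt (R : realType) n (pos : 'I_n -> R) (u v : 'I_n) :
  (forall i j : 'I_n, (i < j)%N -> pos i < pos j) -> (u < v)%N ->
  line_dist pos u v = pos v - pos u /\ line_dist pos v u = pos v - pos u.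
Proof.
move=> hpos huv; have h := hpos _ _ huv; rewrite /line_dist.
by rewrite ltr0_norm ?gtr0_norm; [split; lra|lra|lra].
Qed.

Lemma chain (R : realType) n (pos : 'I_n -> R) (occ : {set 'I_n})
  (p : 'I_n -> R) :
  (forall i j : 'I_n, (i < j)%N -> pos i < pos j) ->
  (forall (u v : 'I_n), u \notin occ -> v \notin occ -> (u < v)%N ->
     (forall k : 'I_n, (u < k < v)%N -> k \in occ) ->
     - line_dist pos u v < p u - p v < line_dist pos u v) ->
  forall u v : 'I_n, u \notin occ -> v \notin occ -> (u < v)%N ->
     - (pos v - pos u) < p u - p v < pos v - pos u.
Proof.
move=> hpos hadj.
suff: forall m (u v : 'I_n), (v - u <= m)%N -> u \notin occ -> v \notin occ -> (u < v)%N ->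
     - (pos v - pos u) < p u - p v < pos v - pos u.
  by move=> H u v; apply: (H (v - u)%N).
elim=> [|m IH] u v hm hu hv huv; first by lia.
case: (pselect (forall k : 'I_n, (u < k < v)%N -> k \in occ)) => hk.
  by have := hadj u v hu hv huv hk; case: (@dist_lt _ _ _ _ _ hpos huv) => -> _.
have [k /andP[/andP[uk kv] /negP kn]] : exists k : 'I_n, ((u < k < v)%N && (k \notin occ)).
  apply: contrapT => hne; apply: hk => k hk; apply: contrapT => kn; apply: hne.
  by exists k; rewrite hk; apply/negP.
have /andP[h1 h2] := IH u k ltac:(lia) hu ltac:(exact/negP) uk.
have /andP[h3 h4] := IH k v ltac:(lia) ltac:(exact/negP) hv kv.
apply/andP; split; lra.
Qed.
Theorem lemma6 (R : realType) (d : measure_display) (Omega : measurableType d)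
  (Pr : probability Omega R) (n : nat) (pos : 'I_n -> R) (occ : {set 'I_n})
  (P : Omega -> 'I_n -> R) :
  (forall i j : 'I_n, (i < j)%N -> pos i < pos j) ->
  (forall w (u : 'I_n), u \notin occ -> 0 <= P w u) ->
  harmonic_payment Pr pos occ P ->
  (forall g : 'I_n, g \notin occ -> forall w, parks_at pos occ (P w) g g) /\
  (forall g vL vR : 'I_n, g \in occ -> (vL < g < vR)%N ->
     vL \notin occ -> vR \notin occ ->
     (forall k : 'I_n, (vL < k < vR)%N -> k \in occ) ->
     let p := line_dist pos g vR / (line_dist pos g vL + line_dist pos g vR) in
     Pr [set w | parks_at pos occ (P w) g vL] = p%:E /\
     Pr [set w | parks_at pos occ (P w) g vR] = (1 - p)%:E).
Proof.
move=> hpos _ [hunif hadj].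
have ch w := @chain _ _ _ _ (P w) hpos (hadj w).
have DL u v := @dist_lt _ _ _ u v hpos.
split.
  move=> g hg w; split => // y hy /eqP yg.
  have ->: line_dist pos g g = 0 by rewrite /line_dist subrr normr0.
  case: (ltngtP y g) => h.
  - have /andP[h1 h2] := ch w _ _ hy hg h; have [_ ->] := DL _ _ h; lra.
  - have /andP[h1 h2] := ch w _ _ hg hy h; have [-> _] := DL _ _ h; lra.
  - by exfalso; apply: yg; apply: val_inj.
move=> g vL vR hg /andP[hLg hgR] hL hR hocc p.
have hLR : (vL < vR)%N by lia.
have [_ ea] := DL _ _ hLg; have [eb _] := DL _ _ hgR; have [eD _] := DL _ _ hLR.
have pa := hpos _ _ hLg; have pb := hpos _ _ hgR.
set a := pos g - pos vL in ea pa *; set b := pos vR - pos g in eb pb *.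
have eD' : line_dist pos vL vR = a + b by rewrite eD /a /b; lra.
have adef : a = pos g - pos vL by [].
have bdef : b = pos vR - pos g by [].
clearbody a b.
set f := fun w => P w vL - P w vR.
have nLR : vR != vL by apply/eqP => /(congr1 val) /= e; lia.
have nRL : vL != vR by rewrite eq_sym.
have other : forall y : 'I_n, y \notin occ -> y != vL -> y != vR ->
    (y < vL)%N \/ (vR < y)%N.
  move=> y hy /eqP n1 /eqP n2; case: (ltngtP y vL) => h1; [by left| |by exfalso; apply: n1; apply: val_inj].
  case: (ltngtP y vR) => h2; [|by right|by exfalso; apply: n2; apply: val_inj].
  by rewrite hocc ?h1 ?h2 in hy.
have EL : [set w | parks_at pos occ (P w) g vL] = f @^-1` `]-oo, b - a[.
  apply/seteqP; split => w /=.
    move=> [_ H]; have := H vR hR nLR; rewrite ea eb in_itv /= /f; lra.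
  rewrite in_itv /= /f => hX; split => // y hy yL.
  rewrite ea; case: (eqVneq y vR) => [->|yR]; first by rewrite eb; lra.
  case: (other y hy yL yR) => h.
  - have /andP[h1 h2] := ch w _ _ hy hL h; have hyg : (y < g)%N by exact: ltn_trans hLg.
    have [_ ->] := DL _ _ hyg; lra.
  - have /andP[h1 h2] := ch w _ _ hR hy h; have hyg : (g < y)%N by exact: ltn_trans hgR h.
    have [-> _] := DL _ _ hyg; lra.
have ER : [set w | parks_at pos occ (P w) g vR] = f @^-1` `]b - a, +oo[.
  apply/seteqP; split => w /=.
    move=> [_ H]; have := H vL hL nRL; rewrite ea eb in_itv /= /f andbT; lra.
  rewrite in_itv /= /f andbT => hX; split => // y hy yR.
  rewrite eb; case: (eqVneq y vL) => [->|yL]; first by rewrite ea; lra.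
  case: (other y hy yL yR) => h.
  - have /andP[h1 h2] := ch w _ _ hy hL h; have hyg : (y < g)%N by exact: ltn_trans hLg.
    have [_ ->] := DL _ _ hyg; lra.
  - have /andP[h1 h2] := ch w _ _ hR hy h; have hyg : (g < y)%N by exact: ltn_trans hgR h.
    have [-> _] := DL _ _ hyg; lra.
have [_ U] := hunif _ _ (And4 hL hR (leq_ltn_trans hLg hgR) hocc).
rewrite eD' in U.
rewrite /p ea eb EL ER !U ?measurable_itv //.
split.
  have -> : `]-oo, b - a[ `&` [set x : R | - (a + b) <= x <= a + b] = `[- (a + b), b - a[%classic.
    apply/seteqP; split => x /=; rewrite !in_itv /=.
      by move=> [h /andP[h1 h2]]; rewrite h1 h.
    by move=> /andP[h1 h2]; split => //; apply/andP; split; lra.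
  rewrite lebesgue_measure_itv /= lte_fin ifT; last by lra.
  rewrite -EFinD -EFinM; congr (_%:E); field; lra.
have -> : `]b - a, +oo[ `&` [set x : R | - (a + b) <= x <= a + b] = `]b - a, a + b]%classic.
  apply/seteqP; split => x /=; rewrite !in_itv /= ?andbT.
    by move=> [h /andP[h1 h2]]; rewrite h2 h.
  by move=> /andP[h1 h2]; split => //; apply/andP; split; lra.
rewrite lebesgue_measure_itv /= lte_fin ifT; last by lra.
rewrite -EFinD -EFinM; congr (_%:E); field; lra.
Qed.
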